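(* Let $f(z)=z+\sum_{k=2}^{\infty}a_kz^k$ be analytic in $\mathbb{D}=\{z:|z|<1\}$ with $zf'(z)-f(z)=\frac12 z^2\phi(z)$ for all $z\in\mathbb{D}$, where $\phi$ is analytic in $\mathbb{D}$ and $|\phi(z)|\le1$. Let $r_{\mathcal K}$ denote the positive root (in $(0,1)$) of \[(1-r)^2\ln(1-r)+2-7r+4r^2=0.\] Then for every $n\ge2$ the partial sum $s_n(z;f)=z+\sum_{k=2}^n a_kz^k$ is convex in the disk $|z|<r_{\mathcal K}$.
   Context: A function analytic in a disk is convex there if it maps the disk conformally onto a convex domain; equivalently, for normalized $g$ with $g'\neq0$, $\mathrm{Re}(1+zg''(z)/g'(z))>0$ in the disk. *)

(* Defs.v *)
(* Stdlib reals + Coquelicot complex numbers C.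
   is_derive over C_AbsRing is the complex (holomorphic) derivative. *)
From Stdlib Require Import Reals.
From Coquelicot Require Export Coquelicot.
Open Scope C_scope.

Definition in_disk (r : R) (z : C) : Prop := (Cmod z < r)%R.

Definition analytic_in_disk (r : R) (g : C -> C) : Prop :=
  forall z, in_disk r z -> ex_derive g z.

(* g is convex in the disk |z| < r (analytic criterion for normalized g):
   g', g'' exist there, g' <> 0 and Re(1 + z g''(z)/g'(z)) > 0. *)
Definition convex_in_disk (r : R) (g : C -> C) : Prop :=
  exists g1 g2 : C -> C,
    forall z, in_disk r z ->
      is_derive g z (g1 z) /\ is_derive g1 z (g2 z) /\
      g1 z <> 0 /\ (0 < Re (1 + z * g2 z / g1 z))%R.

(* partial sum s_n(z; f) = sum_{k=0}^n a_k z^k  (with a_0 = 0, a_1 = 1) *)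
Definition partial_sum (a : nat -> C) (n : nat) (z : C) : C :=
  sum_n (fun k => a k * pow_n z k) n.

(* Main.v *)
Require Import Defs.
From Stdlib Require Import Reals Lra Lia.
From Coquelicot Require Import Coquelicot.
Open Scope R_scope.

Fixpoint Sx (F : nat -> R) (n : nat) : R :=
  match n with
  | O => 0
  | S O => 0
  | S m => Sx F m + F (S m)
  end.

Lemma Sx_S F m : (1 <= m)%nat -> Sx F (S m) = Sx F m + F (S m).
Proof. intros H. destruct m; [lia|]. reflexivity. Qed.

Lemma Sx_plus F G n : Sx (fun k => F k + G k) n = Sx F n + Sx G n.
Proof.
  induction n as [|[|m] IH]; simpl; try lra.
  simpl in IH. rewrite IH. lra.
Qed.

Lemma Sx_ext F G n : (forall k, (2 <= k)%nat -> F k = G k) -> Sx F n = Sx G n.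
Proof.
  intros H. induction n as [|[|m] IH]; simpl; try lra.
  simpl in IH. rewrite IH, H by lia. lra.
Qed.

Lemma Sx_le F G n : (forall k, (2 <= k)%nat -> F k <= G k) -> Sx F n <= Sx G n.
Proof.
  intros H. induction n as [|[|m] IH]; simpl; try lra.
  simpl in IH. specialize (H (S (S m)) ltac:(lia)). lra.
Qed.

Lemma Sx_lt F G n : (2 <= n)%nat -> (forall k, (2 <= k)%nat -> F k <= G k) -> F 2%nat < G 2%nat -> Sx F n < Sx G n.
Proof.
  intros Hn H H2. induction n as [|[|m] IH]; [lia|lia|].
  destruct m. { simpl. lra. }
  change (Sx F (S (S m)) + F (S (S (S m))) < Sx G (S (S m)) + G (S (S (S m)))).
  specialize (H (S (S (S m))) ltac:(lia)). specialize (IH ltac:(lia)). lra.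
Qed.

Lemma Sx_geomd x n : (1 <= n)%nat -> x <> 1 ->
  Sx (fun k => INR k * x ^ (k - 1)) n = (1 - (INR n + 1) * x ^ n + INR n * x ^ (n + 1)) / (1 - x) ^ 2 - 1.
Proof.
  intros Hn Hx. induction n as [|m IH]; [lia|].
  destruct m. { simpl. field. lra. }
  rewrite Sx_S by lia. rewrite IH by lia.
  replace (S (S m) - 1)%nat with (S m) by lia.
  replace (S (S m) + 1)%nat with (S (S (S m))) by lia.
  replace (S m + 1)%nat with (S (S m)) by lia.
  rewrite !S_INR. simpl. field. lra.
Qed.

Lemma Sx_geom x n : (1 <= n)%nat -> x <> 1 ->
  Sx (fun k => x ^ (k - 1)) n = (x - x ^ n) / (1 - x).
Proof.
  intros Hn Hx. induction n as [|m IH]; [lia|].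
  destruct m. { simpl. field. lra. }
  rewrite Sx_S by lia. rewrite IH by lia.
  replace (S (S m) - 1)%nat with (S m) by lia.
  simpl. field. lra.
Qed.

Lemma Sx_zero n : Sx (fun _ => 0) n = 0.
Proof. induction n as [|[|m] IH]; simpl; try lra. simpl in IH. rewrite IH. lra. Qed.

Lemma Sx_deriv (F dF : nat -> R -> R) y n :
  (forall k, (2 <= k)%nat -> is_derive (F k) y (dF k y)) ->
  is_derive (fun y => Sx (fun k => F k y) n) y (Sx (fun k => dF k y) n).
Proof.
  intros H. induction n as [|[|m] IH].
  - simpl. apply (is_derive_const (K:=R_AbsRing) (V:=R_NormedModule) 0).
  - simpl. apply (is_derive_const (K:=R_AbsRing) (V:=R_NormedModule) 0).
  - change (is_derive (fun y => Sx (fun k => F k y) (S m) + F (S (S m)) y) y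
      (Sx (fun k => dF k y) (S m) + dF (S (S m)) y)).
    apply (is_derive_plus (K:=R_AbsRing) (V:=R_NormedModule)); [exact IH| apply H; lia].
Qed.

Lemma Sx_geom2 x n : (1 <= n)%nat -> x <> 1 ->
  Sx (fun k => x ^ (k - 2)) n = (1 - x ^ (n - 1)) / (1 - x).
Proof.
  intros Hn Hx. induction n as [|m IH]; [lia|].
  destruct m. { simpl. field. lra. }
  rewrite Sx_S by lia. rewrite IH by lia.
  replace (S (S m) - 2)%nat with m by lia.
  replace (S (S m) - 1)%nat with (S m) by lia.
  replace (S m - 1)%nat with m by lia.
  simpl. field. lra.
Qed.

Lemma Sx_log x n : 0 <= x < 1 ->
  Sx (fun k => x ^ (k - 1) / (INR k - 1)) n <= - ln (1 - x).
Proof.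
  intros Hx.
  destruct (Nat.eq_dec n 0) as [->|Hn].
  { simpl. assert (ln (1 - x) <= 0). { rewrite <- ln_1. destruct (Req_dec x 0) as [->|].
      rewrite Rminus_0_r; lra. left; apply ln_increasing; lra. } lra. }
  set (phi := fun y => - ln (1 - y) - Sx (fun k => y ^ (k - 1) / (INR k - 1)) n).
  set (dphi := fun y => / (1 - y) - Sx (fun k => y ^ (k - 2)) n).
  assert (Hd : forall y, y < 1 -> is_derive phi y (dphi y)).
  { intros y Hy. unfold phi, dphi.
    apply (is_derive_minus (K:=R_AbsRing) (V:=R_NormedModule)).
    - auto_derive. lra. field. lra.
    - apply (Sx_deriv (fun k y => y ^ (k - 1) / (INR k - 1)) (fun k y => y ^ (k - 2))). intros k Hk.
      assert (HI : INR k - 1 <> 0). { apply Rgt_not_eq. apply (le_INR 2) in Hk. simpl in Hk. lra. }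
      auto_derive. auto. replace (k - 2)%nat with (pred (k - 1)) by lia.
      rewrite minus_INR by lia. simpl. field. auto. }
  assert (Hphi0 : phi 0 = 0).
  { unfold phi. rewrite Rminus_0_r, ln_1.
    rewrite (Sx_ext _ (fun _ => 0)). rewrite Sx_zero. lra.
    intros k Hk. replace (k - 1)%nat with (S (k - 2)) by lia. simpl. field.
    apply Rgt_not_eq. apply (le_INR 2) in Hk. simpl in Hk. lra. }
  destruct (Req_dec x 0) as [->|Hx0].
  { unfold phi in Hphi0; cbv beta in Hphi0. lra. }
  destruct (MVT_gen phi 0 x dphi) as [c [Hc Heq]].
  - intros y Hy. apply Hd. rewrite Rmax_right in Hy; lra.
  - intros y Hy. rewrite Rmax_right in Hy by lra. apply continuity_pt_filterlim.
    apply (ex_derive_continuous (K:=R_AbsRing) (V:=R_NormedModule)). eexists. apply Hd. lra.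
  - rewrite Rmin_left, Rmax_right in Hc by lra.
    assert (0 <= dphi c).
    { unfold dphi. rewrite Sx_geom2; [|lia|lra].
      replace (/ (1 - c) - (1 - c ^ (n - 1)) / (1 - c)) with (c ^ (n - 1) / (1 - c)) by (field; lra).
      apply Rmult_le_pos. apply pow_le; lra. left; apply Rinv_0_lt_compat; lra. }
    rewrite Hphi0 in Heq. unfold phi in Heq.
    assert (0 <= dphi c * (x - 0)) by (apply Rmult_le_pos; lra). lra.
Qed.

Lemma Sx_scal F c n : Sx (fun k => F k * c) n = Sx F n * c.
Proof. induction n as [|[|m] IH]; simpl; try lra. simpl in IH. rewrite IH. lra. Qed.

Lemma real_main rK r n : 0 < rK < 1 ->
  (1 - rK) ^ 2 * ln (1 - rK) + 2 - 7 * rK + 4 * rK ^ 2 = 0 ->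
  0 <= r < rK -> (2 <= n)%nat ->
  Sx (fun k => INR k * r ^ (k - 1) / (2 * (INR k - 1))) n +
  Sx (fun k => INR k * r ^ (k - 1) / 2) n < 1.
Proof.
  intros HK Heq Hr Hn.
  rewrite <- Sx_plus.
  set (T := fun x k => INR k * x ^ (k - 1) / (2 * (INR k - 1)) + INR k * x ^ (k - 1) / 2).
  change (Sx (T r) n < 1).
  assert (Hk1 : forall k, (2 <= k)%nat -> 1 <= INR k - 1).
  { intros k Hk. apply (le_INR 2) in Hk. simpl in Hk. lra. }
  apply Rlt_le_trans with (Sx (T rK) n).
  { apply Sx_lt; auto.
    - intros k Hk. unfold T. specialize (Hk1 k Hk).
      assert (r ^ (k - 1) <= rK ^ (k - 1)) by (apply pow_incr; lra).
      assert (0 <= INR k) by apply pos_INR.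
      assert (INR k * r ^ (k - 1) <= INR k * rK ^ (k - 1)) by (apply Rmult_le_compat_l; lra).
      apply Rplus_le_compat; unfold Rdiv; apply Rmult_le_compat_r; try lra;
        left; apply Rinv_0_lt_compat; lra.
    - unfold T. simpl. lra. }
  set (x := rK). set (u := 1 - x).
  assert (Hu : 0 < u < 1) by (unfold u, x; lra).
  rewrite (Sx_ext _ (fun k => (INR k * x ^ (k - 1) + x ^ (k - 1) + x ^ (k - 1) / (INR k - 1)) * / 2)).
  2:{ intros k Hk. unfold T. specialize (Hk1 k Hk). field. lra. }
  rewrite Sx_scal, !Sx_plus.
  rewrite Sx_geomd, Sx_geom by (lia || (unfold x; lra)).
  pose proof (Sx_log x n ltac:(unfold x; lra)) as HL.
  assert (Hxn : 0 <= (INR n + 1) * x ^ n - INR n * x ^ (n + 1)).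
  { rewrite pow_add. simpl. 
    replace ((INR n + 1) * x ^ n - INR n * (x ^ n * (x * 1))) with (x ^ n * (INR n * (1 - x) + 1)) by ring.
    apply Rmult_le_pos. apply pow_le; unfold x; lra.
    assert (0 <= INR n) by apply pos_INR. unfold x in *. nra. }
  assert (Hxn2 : 0 <= x ^ n) by (apply pow_le; unfold x; lra).
  assert (Hln : - ln u = (2 - 7 * x + 4 * x ^ 2) / u ^ 2).
  { replace (- ln u) with (- (u ^ 2 * ln u) / u ^ 2) by (field; unfold u, x; lra). unfold Rdiv; f_equal. unfold u, x. lra. }
  replace (1 - x) with u in * by reflexivity.
  assert (H1 : (1 - (INR n + 1) * x ^ n + INR n * x ^ (n + 1)) / u ^ 2 - 1 <= 1 / u ^ 2 - 1).
  { unfold Rdiv. apply Rplus_le_compat_r. apply Rmult_le_compat_r.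
    left; apply Rinv_0_lt_compat; nra. lra. }
  assert (H2 : (x - x ^ n) / u <= x / u).
  { unfold Rdiv. apply Rmult_le_compat_r. left; apply Rinv_0_lt_compat; lra. lra. }
  assert (H3 : 1 / u ^ 2 - 1 + x / u + - ln u = 2).
  { rewrite Hln. assert (Hx : x = 1 - u) by (unfold u; ring). rewrite Hx. field. lra. }
  lra.
Qed.
Open Scope C_scope.

Lemma pow_n_Cpow (z : C) k : pow_n z k = Cpow z k.
Proof. induction k; simpl; [reflexivity| now rewrite IHk]. Qed.

Lemma convA (f : C -> C) z l : @is_derive C_AbsRing (AbsRing_NormedModule C_AbsRing) f z l -> @is_derive C_AbsRing C_NormedModule f z l.
Proof. intros [H1 H2]. split. 
- destruct H1 as [a b c]. constructor; [exact a | exact b|]. exact c.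
- intros x Hx eps. exact (H2 x Hx eps). Qed.
Lemma convB (f : C -> C) z l : @is_derive C_AbsRing C_NormedModule f z l -> @is_derive C_AbsRing (AbsRing_NormedModule C_AbsRing) f z l.
Proof. intros [H1 H2]. split. 
- destruct H1 as [a b c]. constructor; [exact a | exact b|]. exact c.
- intros x Hx eps. exact (H2 x Hx eps). Qed.

Lemma is_derive_C_const (c z : C) : is_derive (fun _ : C => c) z (RtoC 0).
Proof. apply (is_derive_const (K:=C_AbsRing) (V:=C_NormedModule)). Qed.

Lemma is_derive_C_id (z : C) : is_derive (fun w : C => w) z (RtoC 1).
Proof. apply convA. apply (is_derive_id (K:=C_AbsRing)). Qed.

Lemma is_derive_C_mult (f g : C -> C) z df dg :
  is_derive f z df -> is_derive g z dg ->
  is_derive (fun w => f w * g w) z (df * g z + f z * dg).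
Proof.
  intros Hf Hg. apply convA. apply (is_derive_mult (K:=C_AbsRing) f g z df dg (convB _ _ _ Hf) (convB _ _ _ Hg)).
  intros; apply Cmult_comm.
Qed.

Lemma is_derive_C_plus (f g : C -> C) z df dg :
  is_derive f z df -> is_derive g z dg ->
  is_derive (fun w => f w + g w) z (df + dg).
Proof.
  intros Hf Hg. apply (is_derive_plus (K:=C_AbsRing) (V:=C_NormedModule) f g z df dg Hf Hg).
Qed.

Lemma is_derive_C_ext (f g : C -> C) z l l' :
  (forall w, f w = g w) -> l = l' -> is_derive f z l -> is_derive g z l'.
Proof. intros H <- Hf. apply (is_derive_ext (K:=C_AbsRing) (V:=C_NormedModule) f g z l H Hf). Qed.

Lemma deriv_Cpow k z : is_derive (fun w : C => Cpow w k) z (INR k * Cpow z (k-1)).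
Proof.
  induction k.
  - eapply is_derive_C_ext; [| | apply (is_derive_C_const 1 z)]; [reflexivity|].
    simpl. ring.
  - eapply is_derive_C_ext; [| | apply (is_derive_C_mult _ _ z _ _ (is_derive_C_id z) IHk)].
    + intros w; simpl; reflexivity.
    + destruct k.
      * simpl. ring.
      * replace (S (S k) - 1)%nat with (S k) by lia. replace (S k - 1)%nat with k by lia.
        rewrite !S_INR. simpl. rewrite !RtoC_plus. ring.
Qed.

Lemma deriv_sum (F dF : nat -> C -> C) z n :
  (forall k, is_derive (F k) z (dF k z)) ->
  is_derive (fun w => sum_n (fun k => F k w) n) z (sum_n (fun k => dF k z) n).
Proof.
  intros H. induction n.
  - eapply is_derive_C_ext; [| | apply (H 0%nat)]; intros; rewrite ?sum_O; reflexivity.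
  - eapply is_derive_C_ext; [| | apply (is_derive_C_plus _ _ z _ _ IHn (H (S n)))];
      intros; rewrite ?sum_Sn; reflexivity.
Qed.
Open Scope C_scope.

Lemma Cnorm x : @norm C_AbsRing C_NormedModule x = Cmod x. Proof. reflexivity. Qed.

Lemma series_terms_bounded (c : nat -> C) l :
  is_series c l -> exists M, (0 <= M)%R /\ forall k, (Cmod (c k) <= M)%R.
Proof.
  intros H. destruct (filterlim_bounded (K:=C_AbsRing) (V:=C_NormedModule) (sum_n c)) as [M HM].
  { exists l. exact H. }
  exists (2 * M)%R. assert (HM0 : (0 <= M)%R) by (eapply Rle_trans; [apply (norm_ge_0 (K:=C_AbsRing) (V:=C_NormedModule))|apply (HM 0%nat)]).
  split; [lra|]. intros k. destruct k.
  - specialize (HM 0%nat). rewrite sum_O in HM. rewrite Cnorm in HM. lra.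
  - pose proof (HM (S k)) as H1. pose proof (HM k) as H2. rewrite sum_Sn in H1.
    replace (c (S k)) with (sum_n c (S k) - sum_n c k).
    2:{ rewrite sum_Sn. change (plus (sum_n c k) (c (S k))) with (sum_n c k + c (S k)). ring. }
    rewrite sum_Sn. change (plus (sum_n c k) (c (S k))) with (sum_n c k + c (S k)).
    unfold Cminus. eapply Rle_trans; [apply Cmod_triangle|]. rewrite Cmod_opp. rewrite !Cnorm in H1, H2.
    change (plus (sum_n c k) (c (S k))) with (sum_n c k + c (S k)) in H1. lra.
Qed.

Lemma series_Cmod_le (c : nat -> C) (d : nat -> R) l L :
  is_series c l -> (forall k, (Cmod (c k) <= d k)%R) -> is_series d L -> (Cmod l <= L)%R.
Proof.
  intros Hc Hd HL.
  assert (Hp : forall n, (Cmod (sum_n c n) <= sum_n d n)%R).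
  { induction n.
    - rewrite !sum_O. apply Hd.
    - rewrite !sum_Sn. change (plus (sum_n c n) (c (S n))) with (sum_n c n + c (S n)).
      eapply Rle_trans; [apply Cmod_triangle|]. specialize (Hd (S n)).
      change (plus (sum_n d n) (d (S n))) with (sum_n d n + d (S n))%R. lra. }
  assert (H1 : is_lim_seq (fun n => Cmod (sum_n c n)) (Cmod l)).
  { unfold is_lim_seq. simpl.
    eapply filterlim_ext. intros n. apply Cnorm.
    rewrite <- Cnorm. eapply filterlim_comp; [exact Hc|]. apply filterlim_norm. }
  assert (H2 : is_lim_seq (sum_n d) L) by exact HL.
  pose proof (is_lim_seq_le _ _ _ _ Hp H1 H2). exact H.
Qed.

Lemma is_series_C_ext (a b : nat -> C) l l' :
  (forall k, a k = b k) -> l = l' -> is_series a l -> is_series b l'.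
Proof. intros H <- Ha. apply (is_series_ext (K:=C_AbsRing) (V:=C_NormedModule) a b l H Ha). Qed.

Lemma is_series_C_plus (a b : nat -> C) la lb :
  is_series a la -> is_series b lb -> is_series (fun k => a k + b k) (la + lb).
Proof. intros Ha Hb. apply (is_series_plus (K:=C_AbsRing) (V:=C_NormedModule) a b la lb Ha Hb). Qed.

Lemma is_series_C_scal (c : C) (a : nat -> C) la :
  is_series a la -> is_series (fun k => c * a k) (c * la).
Proof. intros Ha. apply (is_series_scal (K:=C_AbsRing) (V:=C_NormedModule) c a la Ha). Qed.

Lemma is_series_C_minus (a b : nat -> C) la lb :
  is_series a la -> is_series b lb -> is_series (fun k => a k - b k) (la - lb).
Proof.
  intros Ha Hb. eapply is_series_C_ext; [| |apply (is_series_C_plus _ _ _ _ Ha (is_series_C_scal (-1) _ _ Hb))];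
  intros; simpl; ring.
Qed.


Lemma is_series_delta (m : nat) (v : C) :
  is_series (fun k => if Nat.eqb k m then v else RtoC 0) v.
Proof.
  unfold is_series. apply filterlim_ext_loc with (fun _ => v).
  - exists m. intros n Hn. induction n.
    + assert (m = 0%nat) by lia. subst. rewrite sum_O. reflexivity.
    + rewrite sum_Sn. destruct (Nat.eq_dec m (S n)) as [E|E].
      * subst. rewrite Nat.eqb_refl.
        assert (Hz : forall j, (j <= n)%nat -> sum_n (fun k => if Nat.eqb k (S n) then v else RtoC 0) j = RtoC 0).
        { induction j; intros Hj.
          - rewrite sum_O. reflexivity.
          - rewrite sum_Sn, IHj by lia. replace (Nat.eqb (S j) (S n)) with false.
            change (RtoC 0 + RtoC 0 = RtoC 0). ring. symmetry; apply Nat.eqb_neq; lia. }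
        rewrite Hz by lia. change (v = RtoC 0 + v). ring.
      * rewrite <- IHn by lia. replace (Nat.eqb (S n) m) with false.
        change (v = v + RtoC 0). ring. symmetry; apply Nat.eqb_neq; lia.
  - apply filterlim_const.
Qed.

Fixpoint csum (f : nat -> C) (n : nat) : C :=
  match n with O => RtoC 0 | S n => csum f n + f n end.

Lemma is_series_csum (F : nat -> nat -> C) (G : nat -> C) N :
  (forall j, is_series (F j) (G j)) ->
  is_series (fun k => csum (fun j => F j k) N) (csum G N).
Proof.
  intros H. induction N.
  - simpl. eapply is_series_C_ext; [| | apply (is_series_delta 0 0)].
    intros k; destruct k; reflexivity. reflexivity.
  - simpl. apply is_series_C_plus; auto.
Qed.


Lemma csum_Cmod_const (f : nat -> C) (B : R) N :
  (forall j, (Cmod (f j) <= B)%R) -> (Cmod (csum f N) <= INR N * B)%R.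
Proof.
  intros H. induction N.
  - simpl. rewrite Cmod_0. lra.
  - simpl csum. eapply Rle_trans; [apply Cmod_triangle|]. rewrite S_INR. specialize (H N). lra.
Qed.

Definition omega (N : nat) : C := (cos (2 * PI / INR N), sin (2 * PI / INR N)).

Lemma omega_pow N p : (1 <= N)%nat ->
  Cpow (omega N) p = (cos (2 * PI * INR p / INR N), sin (2 * PI * INR p / INR N)).
Proof.
  intros HN. assert (HNz : INR N <> 0%R) by (apply not_0_INR; lia).
  induction p.
  - simpl. replace (2 * PI * 0 / INR N)%R with 0%R by (field; auto).
    rewrite cos_0, sin_0. reflexivity.
  - rewrite Cpow_S, IHp. unfold omega, Cmult. simpl fst; simpl snd.
    replace (2 * PI * INR (S p) / INR N)%R with (2 * PI / INR N + 2 * PI * INR p / INR N)%R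
      by (rewrite S_INR; field; auto).
    rewrite cos_plus, sin_plus. f_equal; ring.
Qed.

Lemma omega_N N : (1 <= N)%nat -> Cpow (omega N) N = 1.
Proof.
  intros HN. rewrite omega_pow by auto.
  replace (2 * PI * INR N / INR N)%R with (2 * PI)%R by (field; apply not_0_INR; lia).
  rewrite cos_2PI, sin_2PI. reflexivity.
Qed.

Lemma omega_mod N : Cmod (omega N) = 1%R.
Proof.
  unfold Cmod, omega. simpl fst; simpl snd.
  rewrite <- sqrt_1. f_equal. pose proof (sin2_cos2 (2 * PI / INR N)) as H.
  unfold Rsqr in H. lra.
Qed.

Lemma omega_ne1 N p : (0 < p < N)%nat -> Cpow (omega N) p <> 1.
Proof.
  intros Hp E. rewrite omega_pow in E by lia.
  assert (HN : (0 < INR N)%R) by (apply lt_0_INR; lia).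
  assert (Hlt : (INR p < INR N)%R) by (apply lt_INR; lia).
  assert (H0 : (0 < INR p)%R) by (apply lt_0_INR; lia).
  set (th := (2 * PI * INR p / INR N)%R) in E.
  assert (Hth : (0 < th < 2 * PI)%R).
  { unfold th. pose proof PI_RGT_0. split.
    - apply Rdiv_lt_0_compat; [|lra]. apply Rmult_lt_0_compat; lra.
    - apply (Rmult_lt_reg_r (INR N)); [lra|]. unfold Rdiv. rewrite Rmult_assoc, Rinv_l by lra.
      rewrite Rmult_1_r. apply Rmult_lt_compat_l; lra. }
  assert (Hs : sin th = 0%R) by (apply (f_equal snd) in E; simpl in E; exact E).
  assert (Hc : cos th = 1%R) by (apply (f_equal fst) in E; simpl in E; exact E).
  destruct (sin_eq_0_0 th Hs) as [k Hk].
  pose proof PI_RGT_0.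
  assert (Hk1 : (0 < IZR k < 2)%R).
  { rewrite Hk in Hth. split.
    - apply (Rmult_lt_reg_r PI); lra.
    - apply (Rmult_lt_reg_r PI); lra. }
  assert (k = 1%Z).
  { destruct Hk1 as [Ha Hb]. apply lt_IZR in Ha. apply lt_IZR in Hb. lia. }
  subst k. rewrite Hk, Rmult_1_l, cos_PI in Hc. lra.
Qed.

Lemma csum_scal (A : C) f N : csum (fun j => A * f j) N = A * csum f N.
Proof. induction N; simpl; [ring| rewrite IHN; ring]. Qed.

Lemma csum_ext f g N : (forall j, f j = g j) -> csum f N = csum g N.
Proof. intros H. induction N; simpl; [reflexivity| rewrite IHN, H; reflexivity]. Qed.

Lemma gsum_one N : csum (fun j => Cpow 1 j) N = INR N.
Proof. induction N; simpl csum; [reflexivity|]. rewrite IHN, Cpow_1_l, S_INR, RtoC_plus. reflexivity. Qed.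

Lemma gsum_root x N : Cpow x N = 1 -> x <> 1 -> csum (fun j => Cpow x j) N = 0.
Proof.
  intros H1 H2.
  assert (E : forall n, (x - 1) * csum (fun j => Cpow x j) n = Cpow x n - 1).
  { induction n; simpl csum. simpl. ring. rewrite Cmult_plus_distr_l, IHn, Cpow_S. ring. }
  specialize (E N). rewrite H1 in E.
  assert (Hx : x - 1 <> 0) by (intros F; apply H2; apply Ceq_minus; exact F).
  replace (1 - 1) with (RtoC 0) in E by ring.
  transitivity (/ (x - 1) * ((x - 1) * csum (fun j => Cpow x j) N)).
  field. exact Hx. rewrite E. ring.
Qed.

Lemma gsum_mod x N : Cmod x = 1%R -> (Cmod (csum (fun j => Cpow x j) N) <= INR N)%R.
Proof.
  intros H. rewrite <- (Rmult_1_r (INR N)). apply csum_Cmod_const.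
  intros j. rewrite Cmod_pow, H, pow1. lra.
Qed.

Lemma bernoulli e m : (0 <= e <= 1)%R -> (1 - INR m * e <= (1 - e) ^ m)%R.
Proof.
  intros He. induction m.
  - simpl. lra.
  - rewrite S_INR. simpl. assert (0 <= INR m)%R by apply pos_INR.
    assert (0 <= (1 - e) ^ m)%R by (apply pow_le; lra). nra.
Qed.

Lemma pow_le_decr t N k : (0 <= t <= 1)%R -> (N <= k)%nat -> (t ^ k <= t ^ N)%R.
Proof.
  intros Ht Hk. replace k with (N + (k - N))%nat by lia. rewrite pow_add.
  assert (0 <= t ^ N)%R by (apply pow_le; lra).
  assert (t ^ (k - N) <= 1)%R.
  { clear Hk. induction (k - N)%nat; simpl. lra. assert (0 <= t ^ n)%R by (apply pow_le; lra). nra. }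
  nra.
Qed.

Lemma Cmod_RtoC_pow (r : R) k : (0 <= r)%R -> Cmod (Cpow (RtoC r) k) = (r ^ k)%R.
Proof. intros H. rewrite Cmod_pow, Cmod_R, Rabs_pos_eq; auto. Qed.

Lemma avg_bound (b : nat -> C) (M : R) :
  (forall w, (Cmod w < 1)%R -> exists G, is_series (fun k => b k * Cpow w k) G /\ (Cmod G <= M)%R) ->
  forall m, (Cmod (b m) <= M)%R.
Proof.
  intros H m.
  destruct (Rle_or_lt (Cmod (b m)) M) as [|Hlt]; auto. exfalso.
  assert (HM0 : (0 <= M)%R).
  { destruct (H 0 ltac:(rewrite Cmod_0; lra)) as [G [_ HG]]. pose proof (Cmod_ge_0 G). lra. }
  set (B := Cmod (b m)) in *.
  assert (HB : (0 < B)%R) by lra.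
  assert (Hm0 : (0 <= INR m)%R) by apply pos_INR.
  set (e := ((B - M) / (2 * B * (INR m + 1)))%R).
  assert (He : (0 < e <= 1/2)%R).
  { unfold e. split.
    - apply Rdiv_lt_0_compat; [lra|]. apply Rmult_lt_0_compat; lra.
    - apply (Rmult_le_reg_r (2 * B * (INR m + 1))). apply Rmult_lt_0_compat; lra.
      unfold Rdiv. rewrite Rmult_assoc, Rinv_l by (apply Rgt_not_eq; apply Rmult_lt_0_compat; lra). nra. }
  set (r := (1 - e)%R).
  assert (Hr : (1/2 <= r < 1)%R) by (unfold r; lra).
  assert (Hgap : (M < B * r ^ m)%R).
  { pose proof (bernoulli e m ltac:(lra)) as Hb. fold r in Hb.
    assert (B * (1 - INR m * e) <= B * r ^ m)%R by (apply Rmult_le_compat_l; lra).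
    assert (E : (B * (INR m * e) = INR m * (B - M) / (2 * (INR m + 1)))%R) by (unfold e; field; lra).
    assert (INR m * (B - M) / (2 * (INR m + 1)) < B - M)%R.
    { apply (Rmult_lt_reg_r (2 * (INR m + 1))). lra. unfold Rdiv. rewrite Rmult_assoc, Rinv_l by lra. nra. }
    nra. }
  set (gap := (B * r ^ m - M)%R).
  set (s := ((1 + r) / 2)%R).
  assert (Hs : (r < s < 1)%R) by (unfold s; lra).
  destruct (H (RtoC s) ltac:(rewrite Cmod_R, Rabs_pos_eq; lra)) as [Gs [HGs _]].
  destruct (series_terms_bounded _ _ HGs) as [Cb [HCb0 HCb]].
  assert (HbC : forall k, (Cmod (b k) * s ^ k <= Cb)%R).
  { intros k. specialize (HCb k). rewrite Cmod_mult, Cmod_RtoC_pow in HCb by lra. exact HCb. }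
  set (q := (r / s)%R).
  assert (Hq : (0 < q < 1)%R).
  { unfold q. split. apply Rdiv_lt_0_compat; lra.
    apply (Rmult_lt_reg_r s). lra. unfold Rdiv. rewrite Rmult_assoc, Rinv_l by lra. lra. }
  set (t := ((1 + q) / 2)%R).
  assert (Ht : (q < t < 1)%R) by (unfold t; lra).
  set (qt := (q / t)%R).
  assert (Hqt : (0 < qt < 1)%R).
  { unfold qt. split. apply Rdiv_lt_0_compat; lra.
    apply (Rmult_lt_reg_r t). lra. unfold Rdiv. rewrite Rmult_assoc, Rinv_l by lra. lra. }
  set (y := (gap * (1 - qt) / (Cb + 1))%R).
  assert (Hy : (0 < y)%R).
  { unfold y, gap. apply Rdiv_lt_0_compat; [|lra]. apply Rmult_lt_0_compat; lra. }
  destruct (pow_lt_1_zero t ltac:(rewrite Rabs_pos_eq; lra) y Hy) as [N0 HN0].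
  set (N := Nat.max N0 (S m)).
  assert (HN1 : (S m <= N)%nat) by (unfold N; lia).
  assert (HtN : (t ^ N < y)%R).
  { specialize (HN0 N ltac:(unfold N; lia)). rewrite Rabs_pos_eq in HN0; auto. apply pow_le; lra. }
  set (w := omega N).
  assert (HNpos : (0 < INR N)%R) by (apply lt_0_INR; lia).
  set (F := fun j k => (b k * Cpow (RtoC r * Cpow w j) k) * (Cpow (Cpow w j) (N - m) / INR N)).
  assert (HS : forall N', exists S, is_series (fun k => csum (fun j => F j k) N') S /\ (Cmod S <= INR N' * (M / INR N))%R).
  { induction N' as [|N' IH].
    - exists (RtoC 0). split.
      + simpl. eapply is_series_C_ext; [| | apply (is_series_delta 0 (RtoC 0))].
        intros k; destruct k; reflexivity. reflexivity.
      + rewrite Cmod_0. simpl. lra.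
    - destruct IH as [S [HS1 HS2]].
      assert (Hw : (Cmod (RtoC r * Cpow w N') < 1)%R).
      { rewrite Cmod_mult, Cmod_pow. unfold w. rewrite omega_mod, pow1, Cmod_R, Rabs_pos_eq; lra. }
      destruct (H _ Hw) as [G [HG1 HG2]].
      exists (S + G * (Cpow (Cpow w N') (N - m) / INR N)). split.
      + simpl csum. apply is_series_C_plus; auto.
        eapply is_series_C_ext; [| | apply (is_series_C_scal (Cpow (Cpow w N') (N - m) / INR N) _ _ HG1)].
        intros k. unfold F. apply Cmult_comm. apply Cmult_comm.
      + eapply Rle_trans; [apply Cmod_triangle|]. rewrite S_INR.
        rewrite Cmod_mult, Cmod_div, !Cmod_pow. unfold w. rewrite omega_mod, !pow1, Cmod_R, Rabs_pos_eq by lra.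
        2:{ intros E. apply RtoC_inj in E. lra. }
        assert (G1 : (Cmod G * 1 / INR N <= M / INR N)%R).
        { unfold Rdiv. rewrite Rmult_1_r. apply Rmult_le_compat_r. left; apply Rinv_0_lt_compat; lra. lra. }
        nra. }
  destruct (HS N) as [S [HS1 HS2]].
  replace (INR N * (M / INR N))%R with M in HS2 by (field; lra).
  set (c := fun k => csum (fun j => Cpow (Cpow w (k + (N - m))) j) N / INR N).
  assert (Hswap : forall x j p, Cpow (Cpow x j) p = Cpow (Cpow x p) j).
  { intros x j p. rewrite <- !Cpow_mult_r, Nat.mul_comm. reflexivity. }
  assert (Hterm : forall k, csum (fun j => F j k) N = b k * Cpow r k * c k).
  { intros k.
    transitivity (csum (fun j => (b k * Cpow r k * / INR N) * Cpow (Cpow w (k + (N - m))) j) N).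
    - apply csum_ext. intros j. unfold F. rewrite Cpow_mult_l.
      rewrite <- (Hswap w j (k + (N - m))%nat), Cpow_add_r. field.
      intros E. apply RtoC_inj in E. lra.
    - rewrite csum_scal. unfold c, Cdiv. match goal with |- _ = _ * (csum ?f _ * _) => change f with (Cpow (Cpow w (k + (N - m)))) end. ring. }
  assert (HNz : RtoC (INR N) <> 0) by (intros E; apply RtoC_inj in E; lra).
  assert (Hwn : Cpow w N = 1) by (unfold w; apply omega_N; lia).
  assert (Hcm : c m = 1).
  { unfold c. replace (m + (N - m))%nat with N by lia. rewrite Hwn, gsum_one. field. exact HNz. }
  assert (Hc0 : forall k, k <> m -> (k < m + N)%nat -> c k = 0).
  { intros k Hk1 Hk2. unfold c.
    rewrite gsum_root. field. exact HNz.
    - rewrite Hswap, Hwn, Cpow_1_l. reflexivity.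
    - destruct (Nat.lt_ge_cases k m) as [Hkm|Hkm].
      + unfold w. apply omega_ne1. lia.
      + replace (k + (N - m))%nat with ((k - m) + N)%nat by lia.
        rewrite Cpow_add_r, Hwn, Cmult_1_r. unfold w. apply omega_ne1. lia. }
  assert (Hc1 : forall k, (Cmod (c k) <= 1)%R).
  { intros k. unfold c. rewrite Cmod_div by exact HNz. rewrite Cmod_R, Rabs_pos_eq by lra.
    apply (Rmult_le_reg_r (INR N)). lra. unfold Rdiv. rewrite Rmult_assoc, Rinv_l by lra.
    rewrite Rmult_1_r, Rmult_1_l. apply gsum_mod. rewrite Cmod_pow. unfold w. rewrite omega_mod. apply pow1. }
  assert (HS1' : is_series (fun k => b k * Cpow r k * c k) S).
  { eapply is_series_C_ext; [| |exact HS1]. intros k; apply Hterm. reflexivity. }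
  pose proof (is_series_C_minus _ _ _ _ HS1' (is_series_delta m (b m * Cpow r m))) as HE.
  assert (Hd : is_series (fun k => (Cb * t ^ N * qt ^ k)%R) (Cb * t ^ N * / (1 - qt))%R).
  { apply (is_series_scal (K:=R_AbsRing) (V:=R_NormedModule) (Cb * t ^ N)%R).
    apply is_series_geom. rewrite Rabs_pos_eq; lra. }
  assert (Hed : forall k, (Cmod (b k * Cpow r k * c k - (if Nat.eqb k m then b m * Cpow r m else 0)) <= Cb * t ^ N * qt ^ k)%R).
  { intros k.
    assert (Hdk : (0 <= Cb * t ^ N * qt ^ k)%R).
    { apply Rmult_le_pos; [apply Rmult_le_pos; [lra| apply pow_le; lra]| apply pow_le; lra]. }
    destruct (Nat.eq_dec k m) as [->|Hkm].
    { rewrite Nat.eqb_refl, Hcm. replace (b m * Cpow r m * 1 - b m * Cpow r m) with (RtoC 0) by ring.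
      rewrite Cmod_0. exact Hdk. }
    replace (Nat.eqb k m) with false by (symmetry; apply Nat.eqb_neq; exact Hkm).
    destruct (Nat.lt_ge_cases k (m + N)) as [Hk|Hk].
    { rewrite Hc0 by auto. replace (b k * Cpow r k * 0 - 0) with (RtoC 0) by ring.
      rewrite Cmod_0. exact Hdk. }
    replace (b k * Cpow r k * c k - 0) with (b k * Cpow r k * c k) by ring.
    rewrite !Cmod_mult, Cmod_RtoC_pow by lra.
    assert (E1 : (r ^ k = s ^ k * q ^ k)%R).
    { rewrite <- Rpow_mult_distr. unfold q. f_equal. field. lra. }
    assert (E2 : (q ^ k = t ^ k * qt ^ k)%R).
    { rewrite <- Rpow_mult_distr. unfold qt. f_equal. field. lra. }
    assert (Ht1 : (t ^ k <= t ^ N)%R) by (apply pow_le_decr; [lra|lia]).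
    specialize (HbC k). specialize (Hc1 k).
    assert (0 <= Cmod (b k))%R by apply Cmod_ge_0.
    assert (0 <= s ^ k)%R by (apply pow_le; lra).
    assert (0 <= q ^ k)%R by (apply pow_le; lra).
    assert (0 <= t ^ k)%R by (apply pow_le; lra).
    assert (0 <= qt ^ k)%R by (apply pow_le; lra).
    assert (0 <= Cmod (c k))%R by apply Cmod_ge_0.
    rewrite E1, E2.
    assert (Cmod (b k) * (s ^ k * (t ^ k * qt ^ k)) * Cmod (c k) <= Cmod (b k) * s ^ k * (t ^ k * qt ^ k))%R.
    { replace (Cmod (b k) * (s ^ k * (t ^ k * qt ^ k)))%R with (Cmod (b k) * s ^ k * (t ^ k * qt ^ k))%R by ring.
      rewrite <- (Rmult_1_r (Cmod (b k) * s ^ k * (t ^ k * qt ^ k))) at 2.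
      apply Rmult_le_compat_l; [|lra]. apply Rmult_le_pos; [apply Rmult_le_pos|apply Rmult_le_pos]; lra. }
    assert (Cmod (b k) * s ^ k * (t ^ k * qt ^ k) <= Cb * (t ^ N * qt ^ k))%R.
    { assert (t ^ k * qt ^ k <= t ^ N * qt ^ k)%R by (apply Rmult_le_compat_r; lra).
      assert (0 <= t ^ k * qt ^ k)%R by (apply Rmult_le_pos; lra).
      assert (0 <= Cmod (b k) * s ^ k)%R by (apply Rmult_le_pos; lra).
      apply Rmult_le_compat; lra. }
    lra. }
  pose proof (series_Cmod_le _ _ _ _ HE Hed Hd) as Hbd.
  assert (Hsmall : (Cb * t ^ N * / (1 - qt) < gap)%R).
  { assert (0 <= t ^ N)%R by (apply pow_le; lra).
    apply (Rmult_lt_reg_r (1 - qt)). lra. rewrite Rmult_assoc, Rinv_l by lra. rewrite Rmult_1_r.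
    assert (t ^ N * (Cb + 1) < gap * (1 - qt))%R.
    { unfold y in HtN. apply (Rmult_lt_compat_r (Cb + 1)) in HtN; [|lra].
      unfold Rdiv in HtN. rewrite Rmult_assoc, Rinv_l, Rmult_1_r in HtN by lra. exact HtN. }
    nra. }
  assert (Hfin : (B * r ^ m <= Cmod S + Cmod (S - b m * Cpow r m))%R).
  { replace (B * r ^ m)%R with (Cmod (b m * Cpow r m)).
    2:{ rewrite Cmod_mult, Cmod_RtoC_pow by lra. reflexivity. }
    replace (b m * Cpow r m) with (S + - (S - b m * Cpow r m)) at 1 by ring.
    eapply Rle_trans; [apply Cmod_triangle|]. rewrite Cmod_opp. lra. }
  unfold gap in Hsmall. lra.
Qed.

Lemma Cmod_INR k : Cmod (RtoC (INR k)) = INR k.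
Proof. rewrite Cmod_R. apply Rabs_pos_eq, pos_INR. Qed.

Lemma kpow x k : (0 <= x < 1)%R -> (INR k * x ^ k <= / (1 - x))%R.
Proof.
  intros Hx.
  assert (H : (INR k * x ^ k * (1 - x) <= 1 - x ^ k)%R).
  { induction k.
    - simpl. lra.
    - rewrite S_INR. simpl.
      assert (0 <= x ^ k)%R by (apply pow_le; lra).
      assert (x ^ k <= 1)%R by (clear IHk; induction k; simpl; [lra|]; assert (0 <= x ^ k)%R by (apply pow_le; lra); nra).
      assert (H1 : (x * (INR k * x ^ k * (1 - x)) <= x * (1 - x ^ k))%R) by (apply Rmult_le_compat_l; lra).
      assert (H2 : (0 <= (1 - x) * (1 - x * x ^ k))%R).
      { apply Rmult_le_pos; [lra|]. assert (x * x ^ k <= 1 * 1)%R by (apply Rmult_le_compat; lra). lra. }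
      nra. }
  assert (0 <= x ^ k)%R by (apply pow_le; lra).
  apply (Rmult_le_reg_r (1 - x)). lra. rewrite Rinv_l by lra. lra.
Qed.

Lemma taylor_bound (y z : C) (rho : R) k :
  (Cmod y <= rho)%R -> (Cmod z <= rho)%R ->
  (rho ^ 2 * Cmod (Cpow y k - Cpow z k - (y - z) * (INR k * Cpow z (k - 1))) <=
   INR k ^ 2 * rho ^ k * Cmod (y - z) ^ 2)%R.
Proof.
  intros Hy Hz.
  assert (Hr : (0 <= rho)%R) by (pose proof (Cmod_ge_0 y); lra).
  induction k.
  - simpl. replace (1 - 1 - (y - z) * (0 * 1)) with (RtoC 0) by ring. rewrite Cmod_0. lra.
  - destruct k as [|k].
    + simpl. replace (y * 1 - z * 1 - (y - z) * (1 * 1)) with (RtoC 0) by ring.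
      rewrite Cmod_0. assert (0 <= Cmod (y - z)) by apply Cmod_ge_0.
      nra.
    + set (h := y - z) in *.
      replace (S (S k) - 1)%nat with (S k) in * by lia. replace (S k - 1)%nat with k in IHk by lia.
      set (E := Cpow y (S k) - Cpow z (S k) - h * (INR (S k) * Cpow z k)) in IHk.
      replace (Cpow y (S (S k)) - Cpow z (S (S k)) - h * (INR (S (S k)) * Cpow z (S k)))
        with (y * E + INR (S k) * Cpow z k * (h * h)).
      2:{ unfold E, h. rewrite !S_INR, !RtoC_plus. simpl. ring. }
      assert (Hzk : (Cmod (Cpow z k) <= rho ^ k)%R) by (rewrite Cmod_pow; apply pow_incr; split; [apply Cmod_ge_0|auto]).
      assert (HE : (0 <= Cmod E)%R) by apply Cmod_ge_0.
      assert (Hh : (0 <= Cmod h)%R) by apply Cmod_ge_0.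
      assert (Hk : (0 <= INR (S k))%R) by apply pos_INR.
      eapply Rle_trans. { apply Rmult_le_compat_l. nra. apply Cmod_triangle. }
      rewrite !Cmod_mult, Cmod_INR.
      assert (Hrk : (0 <= rho ^ k)%R) by (apply pow_le; lra).
      assert (T1 : (rho ^ 2 * (Cmod y * Cmod E) <= rho * (INR (S k) ^ 2 * rho ^ S k * Cmod h ^ 2))%R).
      { replace (rho ^ 2 * (Cmod y * Cmod E))%R with (Cmod y * (rho ^ 2 * Cmod E))%R by ring.
        assert (0 <= Cmod y)%R by apply Cmod_ge_0. assert (0 <= rho ^ 2 * Cmod E)%R by (apply Rmult_le_pos; nra). apply Rmult_le_compat; lra. }
      assert (T2 : (rho ^ 2 * (INR (S k) * Cmod (Cpow z k) * (Cmod h * Cmod h)) <= INR (S k) * rho ^ (S (S k)) * Cmod h ^ 2)%R).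
      { replace (rho ^ 2 * (INR (S k) * Cmod (Cpow z k) * (Cmod h * Cmod h)))%R with
          ((INR (S k) * (rho * rho) * (Cmod h * Cmod h)) * Cmod (Cpow z k))%R by ring.
        replace (INR (S k) * rho ^ (S (S k)) * Cmod h ^ 2)%R with
          ((INR (S k) * (rho * rho) * (Cmod h * Cmod h)) * rho ^ k)%R by (simpl; ring).
        apply Rmult_le_compat_l; auto. apply Rmult_le_pos; [apply Rmult_le_pos|]; nra. }
      assert (T3 : (rho * (INR (S k) ^ 2 * rho ^ S k * Cmod h ^ 2) + INR (S k) * rho ^ (S (S k)) * Cmod h ^ 2
                   <= INR (S (S k)) ^ 2 * rho ^ S (S k) * Cmod h ^ 2)%R).
      { rewrite (S_INR (S k)). change (rho ^ S (S k))%R with (rho * rho ^ S k)%R.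
        set (K := INR (S k)) in *. set (P := (rho ^ S k)%R). set (H := (Cmod h ^ 2)%R).
        assert (0 <= P)%R by (apply pow_le; lra). assert (0 <= H)%R by (apply pow_le; lra).
        assert (0 <= (K + 1) * (rho * P * H))%R.
        { apply Rmult_le_pos; [lra|]. apply Rmult_le_pos; [apply Rmult_le_pos|]; lra. }
        replace ((K + 1) ^ 2 * (rho * P) * H)%R with (rho * (K ^ 2 * P * H) + K * (rho * P) * H + (K + 1) * (rho * P * H))%R by ring.
        lra. }
      lra.
Qed.

Lemma ratio_pos a b : (0 < a < b)%R -> (0 < a / b < 1)%R.
Proof.
  intros H. split. apply Rdiv_lt_0_compat; lra.
  apply (Rmult_lt_reg_r b). lra. unfold Rdiv. rewrite Rmult_assoc, Rinv_l by lra. lra.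
Qed.

Lemma deriv_series (a : nat -> C) (f : C -> C) (z df : C) :
  (forall w, (Cmod w < 1)%R -> is_series (fun k => a k * Cpow w k) (f w)) ->
  (Cmod z < 1)%R -> is_derive f z df ->
  is_series (fun k => a k * (INR k * Cpow z (k - 1))) df.
Proof.
  intros Hf Hz Hd.
  set (d := (1 - Cmod z)%R).
  assert (Hd0 : (0 < d)%R) by (unfold d; lra).
  assert (Hz0 : (0 <= Cmod z)%R) by apply Cmod_ge_0.
  set (rho := (Cmod z + d / 5)%R). set (t1 := (Cmod z + 2 * d / 5)%R).
  set (t2 := (Cmod z + 3 * d / 5)%R). set (s := (Cmod z + 4 * d / 5)%R).
  assert (Hrho : (0 < rho)%R) by (unfold rho; lra).
  destruct (series_terms_bounded _ _ (Hf (RtoC s) ltac:(rewrite Cmod_R, Rabs_pos_eq; unfold s, d; lra))) as [M [HM0 HM]].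
  assert (HaM : forall k, (Cmod (a k) * s ^ k <= M)%R).
  { intros k. specialize (HM k). rewrite Cmod_mult, Cmod_RtoC_pow in HM by (unfold s; lra). exact HM. }
  set (q1 := (rho / t1)%R). set (q2 := (t1 / t2)%R). set (q3 := (t2 / s)%R).
  assert (Hq1 : (0 < q1 < 1)%R) by (apply ratio_pos; unfold rho, t1; lra).
  assert (Hq2 : (0 < q2 < 1)%R) by (apply ratio_pos; unfold t1, t2; lra).
  assert (Hq3 : (0 < q3 < 1)%R) by (apply ratio_pos; unfold t2, s; lra).
  set (K := (M * / (1 - q1) * / (1 - q2))%R).
  assert (HK : forall k, (Cmod (a k) * (INR k ^ 2 * rho ^ k) <= K * q3 ^ k)%R).
  { intros k.
    assert (E : (rho ^ k = q1 ^ k * q2 ^ k * q3 ^ k * s ^ k)%R).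
    { rewrite <- !Rpow_mult_distr. f_equal. unfold q1, q2, q3. field. unfold t1, t2, s; lra. }
    rewrite E.
    pose proof (kpow q1 k ltac:(lra)). pose proof (kpow q2 k ltac:(lra)).
    assert (0 <= INR k * q1 ^ k)%R by (apply Rmult_le_pos; [apply pos_INR|apply pow_le; lra]).
    assert (0 <= INR k * q2 ^ k)%R by (apply Rmult_le_pos; [apply pos_INR|apply pow_le; lra]).
    assert (0 <= Cmod (a k) * s ^ k)%R by (apply Rmult_le_pos; [apply Cmod_ge_0|apply pow_le; unfold s; lra]).
    assert (0 <= q3 ^ k)%R by (apply pow_le; lra).
    replace (Cmod (a k) * (INR k ^ 2 * (q1 ^ k * q2 ^ k * q3 ^ k * s ^ k)))%R with
      ((INR k * q1 ^ k) * (INR k * q2 ^ k) * (Cmod (a k) * s ^ k) * q3 ^ k)%R by ring.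
    unfold K. apply Rmult_le_compat_r; auto.
    replace (M * / (1 - q1) * / (1 - q2))%R with (/ (1 - q1) * / (1 - q2) * M)%R by ring.
    apply Rmult_le_compat; auto. apply Rmult_le_pos; auto.
    apply Rmult_le_compat; auto. }
  assert (HK0 : (0 <= K)%R).
  { unfold K. apply Rmult_le_pos; [apply Rmult_le_pos|]; auto; left; apply Rinv_0_lt_compat; lra. }
  assert (HexD : ex_series (K:=C_AbsRing) (V:=C_CompleteNormedModule) (fun k => a k * (INR k * Cpow z (k - 1)))).
  { apply (ex_series_le (K:=C_AbsRing) (V:=C_CompleteNormedModule) _ (fun k => (K / rho * q3 ^ k)%R)).
    - intros k. change (Cmod (a k * (INR k * Cpow z (k - 1))) <= K / rho * q3 ^ k)%R.
      assert (0 <= q3 ^ k)%R by (apply pow_le; lra).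
      assert (0 <= K / rho * q3 ^ k)%R by (apply Rmult_le_pos; [apply Rdiv_le_0_compat|]; lra).
      destruct k as [|j].
      + simpl. replace (a 0%nat * (0 * 1)) with (RtoC 0) by ring. rewrite Cmod_0. lra.
      + rewrite !Cmod_mult, Cmod_INR, Cmod_pow. replace (S j - 1)%nat with j by lia.
        specialize (HK (S j)).
        assert (Hzj : (Cmod z ^ j <= rho ^ j)%R) by (apply pow_incr; unfold rho; lra).
        assert (H1 : (1 <= INR (S j))%R) by (rewrite S_INR; pose proof (pos_INR j); lra).
        assert (0 <= Cmod (a (S j)))%R by apply Cmod_ge_0.
        assert (Hp : (Cmod (a (S j)) * (INR (S j) * Cmod z ^ j) <= Cmod (a (S j)) * (INR (S j) ^ 2 * rho ^ S j) / rho)%R).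
        { replace (Cmod (a (S j)) * (INR (S j) ^ 2 * rho ^ S j) / rho)%R with
            (Cmod (a (S j)) * (INR (S j) * (INR (S j) * rho ^ j)))%R by (simpl; field; lra).
          apply Rmult_le_compat_l; auto. apply Rmult_le_compat_l; [lra|].
          assert (0 <= rho ^ j)%R by (apply pow_le; lra). nra. }
        eapply Rle_trans; [exact Hp|]. unfold Rdiv.
        replace (K * / rho * q3 ^ S j)%R with (K * q3 ^ S j * / rho)%R by ring.
        apply Rmult_le_compat_r; [left; apply Rinv_0_lt_compat; lra| exact HK].
    - exists (K / rho * / (1 - q3))%R.
      apply (is_series_scal (K:=R_AbsRing) (V:=R_NormedModule) (K / rho)%R).
      apply is_series_geom. rewrite Rabs_pos_eq; lra. }
  destruct HexD as [D HD].
  change (is_series (fun k => a k * (INR k * Cpow z (k - 1))) D) in HD.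
  set (L := (K / (1 - q3) / rho ^ 2)%R).
  assert (HL0 : (0 <= L)%R).
  { unfold L. apply Rdiv_le_0_compat; [apply Rdiv_le_0_compat; lra| apply pow_lt; lra]. }
  assert (HB : forall y, (Cmod (y - z) < d / 5)%R ->
     (Cmod (f y - f z - (y - z) * D) <= L * Cmod (y - z) ^ 2)%R).
  { intros y Hy.
    assert (Hy1 : (Cmod y <= rho)%R).
    { replace y with (z + (y - z)) by ring. eapply Rle_trans; [apply Cmod_triangle|]. unfold rho; lra. }
    assert (Hser : is_series (fun k => a k * (Cpow y k - Cpow z k - (y - z) * (INR k * Cpow z (k - 1))))
                     (f y - f z - (y - z) * D)).
    { eapply is_series_C_ext; [| | apply (is_series_C_minus _ _ _ _
          (is_series_C_minus _ _ _ _ (Hf y ltac:(unfold rho, d in *; lra)) (Hf z Hz))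
          (is_series_C_scal (y - z) _ _ HD))].
      intros k. simpl. ring. reflexivity. }
    set (h2 := (Cmod (y - z) ^ 2)%R).
    assert (Hh2 : (0 <= h2)%R) by (apply pow_le, Cmod_ge_0).
    apply (series_Cmod_le _ (fun k => (K * h2 / rho ^ 2 * q3 ^ k)%R) _ _ Hser).
    - intros k. rewrite Cmod_mult.
      pose proof (taylor_bound y z rho k Hy1 ltac:(unfold rho; lra)) as HT.
      fold h2 in HT. specialize (HK k).
      assert (Hr2 : (0 < rho ^ 2)%R) by (apply pow_lt; lra).
      set (Ek := Cmod (Cpow y k - Cpow z k - (y - z) * (INR k * Cpow z (k - 1)))) in *.
      assert (0 <= Cmod (a k))%R by apply Cmod_ge_0.
      assert (HEk : (Ek <= INR k ^ 2 * rho ^ k * h2 / rho ^ 2)%R).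
      { apply (Rmult_le_reg_l (rho ^ 2)); auto. unfold Rdiv. 
        replace (rho ^ 2 * (INR k ^ 2 * rho ^ k * h2 * / rho ^ 2))%R with (INR k ^ 2 * rho ^ k * h2)%R by (field; lra).
        exact HT. }
      eapply Rle_trans. { apply Rmult_le_compat_l; [auto| exact HEk]. }
      unfold Rdiv. replace (Cmod (a k) * (INR k ^ 2 * rho ^ k * h2 * / rho ^ 2))%R with
        ((Cmod (a k) * (INR k ^ 2 * rho ^ k)) * (h2 * / rho ^ 2))%R by ring.
      replace (K * h2 * / rho ^ 2 * q3 ^ k)%R with ((K * q3 ^ k) * (h2 * / rho ^ 2))%R by ring.
      apply Rmult_le_compat_r; auto. apply Rmult_le_pos; auto. left; apply Rinv_0_lt_compat; auto.
    - replace (L * h2)%R with (K * h2 / rho ^ 2 * / (1 - q3))%R.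
      2:{ unfold L. field. repeat split; lra. }
      apply (is_series_scal (K:=R_AbsRing) (V:=R_NormedModule) (K * h2 / rho ^ 2)%R).
      apply is_series_geom. rewrite Rabs_pos_eq; lra. }
  replace df with D; [exact HD|].
  destruct (Ceq_dec D df) as [E|Hne]; [exact E|exfalso].
  set (eps := (Cmod (D - df) / 4)%R).
  assert (Heps : (0 < eps)%R).
  { unfold eps. assert (0 < Cmod (D - df))%R. { apply Cmod_gt_0. intros E. apply Hne. apply Ceq_minus. exact E. } lra. }
  destruct Hd as [_ Hd].
  specialize (Hd z (fun P HP => HP) (mkposreal eps Heps)).
  destruct Hd as [del2 Hdel2]. simpl in Hdel2.
  set (del1 := Rmin (d / 5) (eps / (L + 1))).
  assert (Hdel1 : (0 < del1)%R).
  { unfold del1. apply Rmin_pos. lra. apply Rdiv_lt_0_compat; lra. }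
  pose proof (cond_pos del2) as Hdel2p.
  set (hr := (Rmin del1 del2 / 2)%R).
  assert (Hhr : (0 < hr < del1 /\ hr < del2)%R).
  { unfold hr. pose proof (Rmin_l del1 del2). pose proof (Rmin_r del1 del2).
    assert (0 < Rmin del1 del2)%R by (apply Rmin_pos; lra). lra. }
  set (y := z + RtoC hr).
  assert (Hyz : y - z = RtoC hr) by (unfold y; ring).
  assert (Hmod : Cmod (y - z) = hr) by (rewrite Hyz, Cmod_R, Rabs_pos_eq; lra).
  assert (H1 : (Cmod (f y - f z - (y - z) * df) <= eps * hr)%R).
  { assert (Hb : @ball (AbsRing_UniformSpace C_AbsRing) z del2 y).
    { apply (norm_compat1 (K:=C_AbsRing) (V:=AbsRing_NormedModule C_AbsRing)). change (Cmod (y - z) < del2)%R. lra. }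
    specialize (Hdel2 y Hb). change (Cmod (f y - f z - (y - z) * df) <= eps * Cmod (y - z))%R in Hdel2.
    rewrite Hmod in Hdel2. exact Hdel2. }
  assert (H2 : (Cmod (f y - f z - (y - z) * D) <= eps * hr)%R).
  { eapply Rle_trans. apply HB. rewrite Hmod. unfold del1 in Hhr. pose proof (Rmin_l (d / 5) (eps / (L + 1))). lra.
    rewrite Hmod. 
    assert (hr <= eps / (L + 1))%R by (pose proof (Rmin_r (d / 5) (eps / (L + 1))); unfold del1 in Hhr; lra).
    assert (L * hr <= eps)%R.
    { apply Rle_trans with ((L + 1) * hr)%R. nra.
      apply (Rmult_le_compat_l (L + 1)) in H; [|lra]. unfold Rdiv in H.
      rewrite <- Rmult_assoc, (Rmult_comm (L + 1) eps), Rmult_assoc, Rinv_r, Rmult_1_r in H by lra. exact H. }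
    replace (L * hr ^ 2)%R with ((L * hr) * hr)%R by ring. apply Rmult_le_compat_r; lra. }
  assert (H3 : (Cmod ((y - z) * (D - df)) <= 2 * eps * hr)%R).
  { replace ((y - z) * (D - df)) with ((f y - f z - (y - z) * df) - (f y - f z - (y - z) * D)) by ring.
    unfold Cminus at 1. eapply Rle_trans; [apply Cmod_triangle|]. rewrite Cmod_opp. lra. }
  rewrite Cmod_mult, Hmod in H3. unfold eps in H3.
  assert (Cmod (D - df) <= 2 * (Cmod (D - df) / 4))%R.
  { apply (Rmult_le_reg_l hr). lra. lra. }
  assert (0 < Cmod (D - df))%R by (unfold eps in Heps; lra).
  lra.
Qed.
Open Scope C_scope.

Lemma sum_n_bound (t : nat -> C) (F : nat -> R) n : (1 <= n)%nat ->
  (forall k, (2 <= k)%nat -> (Cmod (t k) <= F k)%R) ->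
  (Cmod (sum_n t n - (t 0%nat + t 1%nat)) <= Sx F n)%R.
Proof.
  intros Hn H. induction n as [|m IH]; [lia|].
  destruct m.
  - simpl. rewrite sum_Sn, sum_O. replace (plus (t 0%nat) (t 1%nat) - (t 0%nat + t 1%nat)) with (RtoC 0).
    rewrite Cmod_0. lra. change (plus (t 0%nat) (t 1%nat)) with (t 0%nat + t 1%nat). ring.
  - rewrite Sx_S by lia. rewrite sum_Sn.
    change (plus (sum_n t (S m)) (t (S (S m)))) with (sum_n t (S m) + t (S (S m))).
    replace (sum_n t (S m) + t (S (S m)) - (t 0%nat + t 1%nat)) with
      ((sum_n t (S m) - (t 0%nat + t 1%nat)) + t (S (S m))) by ring.
    eapply Rle_trans; [apply Cmod_triangle|].
    specialize (IH ltac:(lia)). specialize (H (S (S m)) ltac:(lia)). lra.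
Qed.



Lemma convex_from_bounds (a : nat -> C) (rK : R) n :
  a 0%nat = 0 -> a 1%nat = 1 ->
  (forall k, (2 <= k)%nat -> (Cmod (a k) * (2 * (INR k - 1)) <= 1)%R) ->
  (0 < rK < 1)%R ->
  ((1 - rK) ^ 2 * ln (1 - rK) + 2 - 7 * rK + 4 * rK ^ 2 = 0)%R ->
  (2 <= n)%nat -> convex_in_disk rK (partial_sum a n).
Proof.
  intros Ha0 Ha1 Hb HK Heq Hn.
  exists (fun z => sum_n (fun k => a k * (INR k * Cpow z (k - 1))) n).
  exists (fun z => sum_n (fun k => a k * (INR k * (INR (k - 1) * Cpow z (k - 1 - 1)))) n).
  intros z Hz.
  set (r := Cmod z).
  assert (Hr : (0 <= r < rK)%R) by (split; [apply Cmod_ge_0| exact Hz]).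
  assert (Hak : forall k, (2 <= k)%nat -> (Cmod (a k) <= / (2 * (INR k - 1)))%R).
  { intros k Hk. specialize (Hb k Hk). assert (1 <= INR k - 1)%R by (apply (le_INR 2) in Hk; simpl in Hk; lra).
    apply (Rmult_le_reg_r (2 * (INR k - 1))). lra. rewrite Rinv_l by lra. lra. }
  set (u := sum_n (fun k => a k * (INR k * Cpow z (k - 1))) n).
  set (W := sum_n (fun k => a k * (INR k * (INR (k - 1) * Cpow z (k - 1 - 1)))) n).
  assert (HB : (Cmod (u - 1) <= Sx (fun k => INR k * r ^ (k - 1) / (2 * (INR k - 1))) n)%R).
  { replace (RtoC 1) with ((fun k => a k * (INR k * Cpow z (k - 1))) 0%nat + (fun k => a k * (INR k * Cpow z (k - 1))) 1%nat).
    2:{ simpl. rewrite Ha0, Ha1. ring. }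
    apply sum_n_bound. lia.
    intros k Hk. rewrite !Cmod_mult, Cmod_INR, Cmod_pow. fold r.
    assert (0 <= INR k * r ^ (k - 1))%R by (apply Rmult_le_pos; [apply pos_INR| apply pow_le; lra]).
    specialize (Hak k Hk).
    unfold Rdiv. rewrite Rmult_comm. apply Rmult_le_compat_l; auto. }
  assert (HA : (Cmod (z * W) <= Sx (fun k => INR k * r ^ (k - 1) / 2) n)%R).
  { assert (E : z * W = sum_n (fun k => z * (a k * (INR k * (INR (k - 1) * Cpow z (k - 1 - 1))))) n - 
       ((fun k => z * (a k * (INR k * (INR (k - 1) * Cpow z (k - 1 - 1))))) 0%nat +
        (fun k => z * (a k * (INR k * (INR (k - 1) * Cpow z (k - 1 - 1))))) 1%nat)).
    { assert (E0 : (fun k => z * (a k * (INR k * (INR (k - 1) * Cpow z (k - 1 - 1))))) 0%nat +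
        (fun k => z * (a k * (INR k * (INR (k - 1) * Cpow z (k - 1 - 1))))) 1%nat = 0).
      { simpl. rewrite Ha0. ring. }
      rewrite E0. assert (E1 : forall x : C, x - 0 = x) by (intros; ring). rewrite E1.
      unfold W. rewrite <- (sum_n_mult_l (K:=C_Ring)). reflexivity. }
    rewrite E.
    apply sum_n_bound. lia.
    intros k Hk. rewrite !Cmod_mult, !Cmod_INR, Cmod_pow. fold r.
    specialize (Hak k Hk).
    assert (H1 : (1 <= INR k - 1)%R) by (apply (le_INR 2) in Hk; simpl in Hk; lra).
    rewrite minus_INR by lia. simpl INR.
    replace (r * (Cmod (a k) * (INR k * ((INR k - 1) * r ^ (k - 1 - 1)))))%R with
      ((Cmod (a k) * (INR k - 1)) * (INR k * r ^ (k - 1)))%R.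
    2:{ assert (Ep : (r ^ (k - 1) = r * r ^ (k - 1 - 1))%R) by (replace (k - 1)%nat with (S (k - 1 - 1)) at 1 by lia; reflexivity). rewrite Ep. ring. }
    assert (0 <= INR k * r ^ (k - 1))%R by (apply Rmult_le_pos; [apply pos_INR| apply pow_le; lra]).
    assert (Cmod (a k) * (INR k - 1) <= / 2)%R.
    { apply (Rmult_le_compat_r (INR k - 1)) in Hak; [|lra].
      replace (/ (2 * (INR k - 1)) * (INR k - 1))%R with (/ 2)%R in Hak by (field; lra). exact Hak. }
    unfold Rdiv. rewrite Rmult_comm. apply Rmult_le_compat_l; auto. }
  pose proof (real_main rK r n HK Heq Hr Hn) as HR.
  assert (HS : (0 <= Sx (fun k => INR k * r ^ (k - 1) / 2) n)%R) by (eapply Rle_trans; [apply Cmod_ge_0|exact HA]).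
  assert (Hu : (1 - Sx (fun k => INR k * r ^ (k - 1) / (2 * (INR k - 1))) n <= Cmod u)%R).
  { assert (Cmod 1 <= Cmod (u - 1) + Cmod u)%R.
    { replace (RtoC 1) with (- (u - 1) + u) at 1 by ring. eapply Rle_trans; [apply Cmod_triangle|].
      rewrite Cmod_opp. lra. }
    rewrite Cmod_1 in H. lra. }
  assert (Hu0 : u <> RtoC 0).
  { intros E. assert (Cmod u = 0%R) by (unfold u in *; rewrite E; apply Cmod_0). lra. }
  split; [|split; [|split]].
  - unfold partial_sum.
    apply (deriv_sum (fun k w => a k * pow_n w k) (fun k w => a k * (INR k * Cpow w (k - 1)))).
    intros k. eapply is_derive_C_ext; [| |apply (is_derive_C_mult _ _ z _ _ (is_derive_C_const (a k) z) (deriv_Cpow k z))].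
    + intros w. now rewrite pow_n_Cpow.
    + simpl. ring.
  - apply (deriv_sum (fun k w => a k * (INR k * Cpow w (k - 1))) (fun k w => a k * (INR k * (INR (k - 1) * Cpow w (k - 1 - 1))))).
    intros k. eapply is_derive_C_ext; [| |apply (is_derive_C_mult _ _ z _ _ (is_derive_C_const (a k) z)
       (is_derive_C_mult _ _ z _ _ (is_derive_C_const (INR k) z) (deriv_Cpow (k - 1) z)))].
    + intros w. simpl. reflexivity.
    + simpl. ring.
  - exact Hu0.
  - cbv beta. fold u W. rewrite re_plus. simpl (Re 1).
    assert (Hc : (Rabs (Re (z * W / u)) <= Cmod (z * W) / Cmod u)%R).
    { rewrite <- Cmod_div by exact Hu0. apply re_le_Cmod. }
    assert (HQ : (Cmod (z * W) / Cmod u < 1)%R).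
    { apply (Rmult_lt_reg_r (Cmod u)). lra. unfold Rdiv. rewrite Rmult_assoc, Rinv_l by lra. lra. }
    apply Rabs_le_between in Hc. lra.
Qed.


Theorem theorem2p1 (a : nat -> C) (f phi : C -> C) (rK : R) :
  a 0%nat = 0 -> a 1%nat = 1 ->
  (forall z, in_disk 1 z -> is_series (fun k => a k * pow_n z k) (f z)) ->
  analytic_in_disk 1 phi ->
  (forall z, in_disk 1 z -> (Cmod (phi z) <= 1)%R) ->
  (forall z, in_disk 1 z ->
     exists df, is_derive f z df /\ z * df - f z = (z * z * phi z) / 2) ->
  (0 < rK < 1)%R ->
  ((1 - rK) ^ 2 * ln (1 - rK) + 2 - 7 * rK + 4 * rK ^ 2 = 0)%R ->
  forall n : nat, (2 <= n)%nat -> convex_in_disk rK (partial_sum a n).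
Proof.
  intros Ha0 Ha1 Hser _ Hphi Hde HK Heq n Hn.
  apply convex_from_bounds; auto.
  assert (Hf : forall w, (Cmod w < 1)%R -> is_series (fun k => a k * Cpow w k) (f w)).
  { intros w Hw. eapply is_series_C_ext; [| |apply (Hser w Hw)]. intros k; rewrite pow_n_Cpow; reflexivity. reflexivity. }
  assert (Havg : forall k, (Cmod ((INR k - 1)%R * a k) <= / 2)%R).
  { apply avg_bound. intros w Hw.
    destruct (Hde w Hw) as [df [Hd Hdf]].
    pose proof (deriv_series a f w df Hf Hw Hd) as HD.
    exists (w * df - f w). split.
    - eapply is_series_C_ext; [| | apply (is_series_C_minus _ _ _ _ (is_series_C_scal w _ _ HD) (Hf w Hw))].
      + intros k. destruct k.
        * simpl. rewrite RtoC_minus. simpl. ring.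
        * replace (S k - 1)%nat with k by lia. rewrite RtoC_minus. simpl. ring.
      + reflexivity.
    - rewrite Hdf. unfold Cdiv. rewrite !Cmod_mult.
      rewrite Cmod_inv by (intros E; apply RtoC_inj in E; lra).
      rewrite Cmod_R, Rabs_pos_eq by lra.
      specialize (Hphi w Hw).
      assert (0 <= Cmod w)%R by apply Cmod_ge_0. assert (0 <= Cmod (phi w))%R by apply Cmod_ge_0.
      unfold in_disk in Hw.
      assert (Cmod w * Cmod w * Cmod (phi w) <= 1)%R.
      { assert (Cmod w * Cmod w <= 1)%R by nra. nra. }
      lra. }
  intros k Hk. specialize (Havg k).
  assert (H1 : (1 <= INR k - 1)%R) by (apply (le_INR 2) in Hk; simpl in Hk; lra).
  rewrite Cmod_mult, Cmod_R, Rabs_pos_eq in Havg by lra.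
  nra.
Qed.
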